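(* The bounded orbits of $\Phi_{\mathrm{Id}}\colon\mathrm{M}\mapsto\mathrm{M}^2$ on $\mathcal{M}(2;\mathbb{C})$ are contained in $\overline{\mathrm{W}^s_{\mathrm{Id}}(\mathbf{0})}$; every element $\mathrm{M}$ of $\overline{\mathrm{W}^s_{\mathrm{Id}}(\mathbf{0})}$ has a bounded orbit, except the matrices whose Jordan form is $\begin{bmatrix}\lambda&1\\0&\lambda\end{bmatrix}$ with $|\lambda|=1$.
   Context: $\mathrm{W}^s_{\mathrm{Id}}(\mathbf{0})=\{\mathrm{M}\in\mathcal{M}(2;\mathbb{C}):\Phi_{\mathrm{Id}}^k(\mathrm{M})\to\mathbf{0}\text{ as }k\to\infty\}$, where $\mathbf{0}$ is the zero matrix; the bar denotes topological closure. *)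

(* Defs.v *)
From HB Require Import structures.
From mathcomp Require Import all_boot all_order all_algebra.
From mathcomp Require Import all_classical all_reals all_analysis.
From mathcomp Require Import complex.
Set Implicit Arguments. Unset Strict Implicit. Unset Printing Implicit Defensive.
Import Order.TTheory GRing.Theory Num.Theory.
Import numFieldTopology.Exports numFieldNormedType.Exports.
Local Open Scope ring_scope.
Local Open Scope classical_set_scope.

(* The complex numbers C = R[i] over a realType R (e.g. the reals),
   viewed as a numClosedFieldType so that MathComp-Analysis' generic
   topology/norm instances apply to C and to matrices over C. *)
Definition C (R : realType) : numClosedFieldType := R[i].

Definition Phi_Id (R : realType) (M : 'M[C R]_2) : 'M[C R]_2 := M *m M.

Definition orbit_Id (R : realType) (M : 'M[C R]_2) : set 'M[C R]_2 :=
  range (fun k : nat => iter k (@Phi_Id R) M).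

Definition Ws_Id (R : realType) : set 'M[C R]_2 :=
  [set M | (fun k : nat => iter k (@Phi_Id R) M) @ \oo --> (0 : 'M[C R]_2)].

Definition jordan_block2 (R : realType) (l : C R) : 'M[C R]_2 :=
  \matrix_(i < 2, j < 2)
    (if i == j then l else if (i == 0) && (j == 1) then 1 else 0).

Definition has_jordan_form_block (R : realType) (M : 'M[C R]_2) (l : C R) :=
  exists P : 'M[C R]_2, P \in unitmx /\ M = P *m jordan_block2 l *m invmx P.

(* Main.v *)
Require Import Defs.
From HB Require Import structures.
From mathcomp Require Import all_boot all_order all_algebra.
From mathcomp Require Import all_classical all_reals all_analysis.
From mathcomp Require Import complex ring.
Import Order.TTheory GRing.Theory Num.Theory.
Import numFieldTopology.Exports numFieldNormedType.Exports.
Local Open Scope ring_scope.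
Local Open Scope classical_set_scope.
Set Implicit Arguments. Unset Strict Implicit.
Section S.
Variable R : realType.
Notation CC := (C R).
Definition tr2 (N : 'M[CC]_2) := N 0 0 + N 1 1.
Definition dt2 (N : 'M[CC]_2) := N 0 0 * N 1 1 - N 0 1 * N 1 0.
Lemma ord2_cases (i : 'I_2) : i = 0 \/ i = 1.
Proof. case: i => [[|[|k]] Hi]; [left|right|by []]; exact: val_inj. Qed.
Lemma mx2P (A B : 'M[CC]_2) : A 0 0 = B 0 0 -> A 0 1 = B 0 1 -> A 1 0 = B 1 0 -> A 1 1 = B 1 1 -> A = B.
Proof. move=> h1 h2 h3 h4; apply/matrixP => i j.
by case: (ord2_cases i) => ->; case: (ord2_cases j) => ->. Qed.
Lemma o0 : (ord0 : 'I_2) = 0. Proof. by apply: val_inj. Qed.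
Lemma o1 : lift ord0 (ord0 : 'I_1) = 1 :> 'I_2. Proof. by apply: val_inj. Qed.
Lemma CH a c (N : 'M[CC]_2) : a + c = tr2 N -> a * c = dt2 N -> (N - a%:M) *m (N - c%:M) = 0.
Proof.
rewrite /tr2 /dt2 => h1 h2.
have hc : c = N 0 0 + N 1 1 - a by rewrite -h1; ring.
rewrite hc in h2 *.
have h2' : a * (N 0 0 + N 1 1 - a) - (N 0 0 * N 1 1 - N 0 1 * N 1 0) = 0 by rewrite h2 subrr.
apply: mx2P; rewrite !mxE !big_ord_recl big_ord0 !mxE /= ?o0 ?o1 ?mulr1n ?mulr0n ?subr0;
  try (apply: (etrans _ h2'); ring); ring.
Qed.
Lemma roots (N : 'M[CC]_2) : exists a c, a + c = tr2 N /\ a * c = dt2 N.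
Proof.
set t := tr2 N; set d := dt2 N.
set s := sqrtC (t ^+ 2 - 4 * d).
have hs : s ^+ 2 = t ^+ 2 - 4 * d by rewrite sqrtCK.
exists ((t + s) / 2), ((t - s) / 2); split.
  by field.
have -> : (t + s) / 2 * ((t - s) / 2) = (t ^+ 2 - s ^+ 2) / 4 by field.
by rewrite hs; field.
Qed.

Fixpoint pseq (a c : CC) (n : nat) : CC :=
  if n is n'.+1 then a ^+ n' + c * pseq a c n' else 0.

Lemma powE a c (N : 'M[CC]_2) : (N - c%:M) *m (N - a%:M) = 0 ->
  forall n, N ^+ n = (a ^+ n)%:M + pseq a c n *: (N - a%:M).
Proof.
move=> h.
have hN : N *m (N - a%:M) = c *: (N - a%:M).
  by apply/eqP; rewrite -subr_eq0 -mul_scalar_mx -mulmxBl h.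
elim=> [|n IH]; first by rewrite expr0 scale0r addr0.
rewrite exprS IH -mulmxE mulmxDr -scalemxAr hN mul_mx_scalar /=.
apply/matrixP => i j; rewrite !mxE; case: (i == j) => /=; rewrite ?mulr1n ?mulr0n ?exprS; ring.
Qed.
Lemma pseq_diff a c n : pseq a c n * (a - c) = a ^+ n - c ^+ n.
Proof. elim: n => [|n IH] /=; first by rewrite mul0r !expr0 subrr.
rewrite mulrDl -mulrA IH !exprS; ring. Qed.

Lemma pseq_eq a n : pseq a a n.+1 = n.+1%:R * a ^+ n.
Proof. elim: n => [|n IH]; first by rewrite /= mulr0 addr0 expr0 mulr1.
have -> : pseq a a n.+2 = a ^+ n.+1 + a * pseq a a n.+1 by [].
rewrite IH exprS -[(n.+2)%:R]natr1 -[(n.+1)%:R]natr1; ring. Qed.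

Lemma pseq_bound a c (r : CC) n : 0 <= r -> `|a| <= r -> `|c| <= r ->
  `|pseq a c n.+1| <= n.+1%:R * r ^+ n.
Proof.
move=> r0 ha hc; elim: n => [|n IH].
  by rewrite /= mulr0 addr0 expr0 normr1 mulr1.
have -> : pseq a c n.+2 = a ^+ n.+1 + c * pseq a c n.+1 by [].
apply: (le_trans (ler_normD _ _)).
rewrite normrM normrX.
have h1 : `|a| ^+ n.+1 <= r ^+ n.+1 by rewrite lerXn2r // nnegrE.
have h2 : `|c| * `|pseq a c n.+1| <= r * (n.+1%:R * r ^+ n).
  by apply: ler_pM => //.
apply: (le_trans (lerD h1 h2)).
rewrite -[(n.+2)%:R]natr1 exprS; rewrite le_eqVlt; apply/orP; left; apply/eqP; ring.
Qed.

Lemma eigen a c (N : 'M[CC]_2) : a + c = tr2 N -> a * c = dt2 N ->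
  exists W : 'M[CC]_2, W != 0 /\ N *m W = a *: W.
Proof.
move=> h1 h2.
have hCH := @CH a c N h1 h2.
have [W0|Wn0] := eqVneq (N - c%:M) 0.
  have hN : N = c%:M by apply/eqP; rewrite -subr_eq0 W0.
  have hac : a = c.
    move: h1; rewrite /tr2 hN !mxE /= => h1.
    by apply: (addIr c); rewrite h1.
  exists 1%:M; split; first by rewrite -[_ == _]/(1 == 0 :> 'M[CC]_2) oner_eq0.
  by rewrite hN hac mul_scalar_mx.
exists (N - c%:M); split => //.
by apply/eqP; rewrite -subr_eq0 -mul_scalar_mx -mulmxBl hCH.
Qed.

Lemma eigen_pow (N W : 'M[CC]_2) a : N *m W = a *: W -> forall n, N ^+ n *m W = a ^+ n *: W.
Proof. move=> h; elim=> [|n IH]; first by rewrite expr0 mul1mx scale1r.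
by rewrite exprS -mulmxE -mulmxA IH -scalemxAr h scalerA -exprSr. Qed.

Lemma entry_le (A : 'M[CC]_2) i j : `|A i j| <= `|A|.
Proof.
rewrite [leRHS]/Num.Def.normr /= mx_normE -[leLHS]nngE num_le.
exact: (le_bigmax _ (fun ij : 'I_2 * 'I_2 => `|A ij.1 ij.2|%:nng) (i, j)).
Qed.

Lemma norm_le (A : 'M[CC]_2) (B : CC) : 0 <= B -> (forall i j, `|A i j| <= B) -> `|A| <= B.
Proof.
move=> B0 h; rewrite [leLHS]/Num.Def.normr /= mx_normE.
rewrite -[B]/((NngNum B0)%:num) num_le; apply/bigmax_leP; split => // ij _.
by rewrite -num_le /=.
Qed.
Lemma mul_entry_le (A B : 'M[CC]_2) i j : `|(A *m B) i j| <= `|A| * `|B| *+ 2.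
Proof.
rewrite mxE !big_ord_recl big_ord0 addr0.
apply: (le_trans (ler_normD _ _)); rewrite mulr2n.
by apply: lerD; rewrite normrM; apply: ler_pM => //; apply: entry_le.
Qed.

Lemma mulmx_norm_le (A B : 'M[CC]_2) : `|A *m B| <= `|A| * `|B| *+ 2.
Proof.
apply: norm_le; first by rewrite mulrn_wge0 // mulr_ge0.
by move=> i j; apply: mul_entry_le.
Qed.

Lemma bern (h : CC) n : 0 <= h -> 1 + n%:R * h <= (1 + h) ^+ n.
Proof.
move=> h0; elim: n => [|n IH]; first by rewrite mul0r addr0 expr0.
rewrite exprS.
have h1 : 0 <= 1 + h by rewrite addr_ge0.
apply: (le_trans _ (ler_wpM2l h1 IH)).
have -> : (1 + h) * (1 + n%:R * h) = 1 + n.+1%:R * h + n%:R * h ^+ 2.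
  by rewrite -natr1; ring.
by rewrite lerDl mulr_ge0 // exprn_ge0.
Qed.

Lemma archiC (x : CC) : x \is Num.real -> exists n : nat, x < n%:R.
Proof.
move=> hx; have [k ->] := @complex_realP R x hx.
exists (Num.bound `|k|).
have hk := archi_boundP (normr_ge0 k).
have hk2 : k < (Num.bound `|k|)%:R.
  exact: (le_lt_trans (ler_norm k) hk).
by rewrite -(rmorph_nat (real_complex R)) ltcR.
Qed.
Lemma geo_le (r : CC) n : 0 < r -> r < 1 -> r ^+ n * (1 + n%:R * (r^-1 - 1)) <= 1.
Proof.
move=> r0 r1.
have t0 : 0 <= r^-1 - 1 by rewrite subr_ge0 ltW // invf_gt1.
have e : 1 + (r^-1 - 1) = r^-1 by rewrite addrC subrK.
have := @bern _ n t0; rewrite e => hb.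
apply: (le_trans (ler_wpM2l (exprn_ge0 n (ltW r0)) hb)).
by rewrite -exprMn mulfV ?gt_eqF // expr1n.
Qed.

Lemma lin_geo_bound (r : CC) : 0 <= r -> r < 1 ->
  exists B : CC, 0 <= B /\ forall n, n%:R * r ^+ n <= B.
Proof.
move=> r0 r1; have [<-|rp] := eqVneq 0 r.
  exists 1; split => // -[|n]; first by rewrite mul0r.
  by rewrite expr0n /= mulr0.
have rp' : 0 < r by rewrite lt_def eq_sym rp r0.
have t0 : 0 < r^-1 - 1 by rewrite subr_gt0 invf_gt1.
exists (r^-1 - 1)^-1; split; first by rewrite invr_ge0 ltW.
move=> n; have h := @geo_le r n rp' r1.
rewrite -[X in _ <= X]mul1r ler_pdivlMr //.
apply: le_trans h.
have x0 : 0 <= r ^+ n by rewrite exprn_ge0.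
move: x0; set x := r ^+ n => x0.
have -> : x * (1 + n%:R * (r^-1 - 1)) = x + n%:R * x * (r^-1 - 1) by ring.
by rewrite lerDr.
Qed.

Lemma geo_small (r : CC) : 0 < r -> r < 1 -> forall eps : CC, 0 < eps ->
  exists N : nat, forall n, (N <= n)%N -> r ^+ n < eps.
Proof.
move=> r0 r1 eps e0.
have t0 : 0 < r^-1 - 1 by rewrite subr_gt0 invf_gt1.
set t := r^-1 - 1 in t0 *.
have et : 0 < (eps * t)^-1 by rewrite invr_gt0 mulr_gt0.
have [N hN] := @archiC _ (gtr0_real et).
exists N.+1 => n hn.
have np : 0 < n%:R :> CC by rewrite ltr0n; apply: leq_trans hn.
have nt : 0 < n%:R * t by rewrite mulr_gt0.
have h := @geo_le r n r0 r1; rewrite -/t in h.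
have h2 : r ^+ n * (n%:R * t) <= 1.
  apply: le_trans h; rewrite ler_wpM2l ?exprn_ge0 ?ltW //.
  by rewrite ?lerDr ?ltrDr ?ler01 ?ltr01.
have h3 : 1 < eps * (n%:R * t).
  have hn' : (eps * t)^-1 < n%:R by apply: (lt_le_trans hN); rewrite ler_nat ltnW.
  have et0 : 0 < eps * t by rewrite mulr_gt0.
  rewrite -(ltr_pM2l et0) mulfV ?gt_eqF // in hn'.
  apply: (lt_le_trans hn'); rewrite le_eqVlt; apply/orP; left; apply/eqP; ring.
rewrite -(ltr_pM2r nt); exact: (le_lt_trans h2 h3).
Qed.

Lemma nz_entry (W : 'M[CC]_2) : W != 0 -> exists i j, W i j != 0.
Proof.
move=> hW.
case: (eqVneq (W 0 0) 0) => h00; last by exists 0, 0.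
case: (eqVneq (W 0 1) 0) => h01; last by exists 0, 1.
case: (eqVneq (W 1 0) 0) => h10; last by exists 1, 0.
case: (eqVneq (W 1 1) 0) => h11; last by exists 1, 1.
exfalso; move/eqP: hW; apply; apply: mx2P; by rewrite mxE.
Qed.
Lemma iterE (M : 'M[CC]_2) k : iter k (@Phi_Id R) M = M ^+ (2 ^ k).
Proof. elim: k => [|k IH] /=; first by rewrite expr1.
by rewrite IH /Phi_Id mulmxE -exprD expnS mul2n -addnn. Qed.

Lemma bounded_orbitP (M : 'M[CC]_2) : bounded_set (orbit_Id M) ->
  exists B : CC, forall k, `|M ^+ (2 ^ k)| <= B.
Proof.
case=> B0 [hr hB]; exists (B0 + 1) => k.
have := hB (B0 + 1); rewrite ltrDl ltr01 => /(_ isT).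
by move=> /(_ (M ^+ (2 ^ k))); apply; exists k => //; rewrite iterE.
Qed.

Lemma bounded_orbitI (M : 'M[CC]_2) (B : CC) : (forall k, `|M ^+ (2 ^ k)| <= B) ->
  bounded_set (orbit_Id M).
Proof.
move=> h; exists B; split.
  by apply: ger0_real; apply: le_trans (h 0%N).
by move=> x Bx y [k _ <-]; rewrite iterE; apply: (le_trans (h k)); apply: ltW.
Qed.

Lemma EVB (M W : 'M[CC]_2) a B K0 : W != 0 -> M *m W = a *: W ->
  (forall k, (K0 <= k)%N -> `|M ^+ (2 ^ k)| <= B) -> `|a| <= 1.
Proof.
move=> hW hMW hB.
have [i [j hij]] := @nz_entry W hW.
have B0 : 0 <= B by apply: le_trans (hB K0 (leqnn _)).
have key : forall k, (K0 <= k)%N -> `|a| ^+ (2 ^ k) * `|W i j| <= B * `|W| *+ 2.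
  move=> k hk; rewrite -normrX -normrM.
  have := mul_entry_le (M ^+ (2 ^ k)) W i j.
  rewrite (eigen_pow hMW) mxE => h; apply: (le_trans h).
  by rewrite lerMn2r /= ler_wpM2r // hB.
rewrite real_leNgt ?normr_real //; apply/negP => ha.
set h := `|a| - 1.
have h0 : 0 < h by rewrite subr_gt0.
have wp : 0 < `|W i j| by rewrite normr_gt0.
set X := (B * `|W| *+ 2) / (h * `|W i j|).
have Xr : X \is Num.real.
  by apply: ger0_real; rewrite divr_ge0 ?mulrn_wge0 ?mulr_ge0 // ltW // mulr_gt0.
have [k0 hk] := @archiC X Xr.
set k := maxn k0 K0.
have hk2 : X < (2 ^ k)%:R.
  apply: (lt_le_trans hk); rewrite ler_nat.
  apply: leq_trans (ltnW (ltn_expl k0 (isT : 1 < 2)%N)) _.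
  by rewrite leq_pexp2l // leq_maxl.
have := key k (leq_maxr _ _).
have hb := @bern h (2 ^ k) (ltW h0).
have e : 1 + h = `|a| by rewrite /h addrC subrK.
rewrite e in hb.
move=> hk3.
have : (2 ^ k)%:R * h * `|W i j| <= B * `|W| *+ 2.
  apply: le_trans hk3; rewrite ler_wpM2r ?normr_ge0 //.
  by apply: le_trans hb; rewrite lerDr.
rewrite -mulrA -ler_pdivlMr ?mulr_gt0 // -/X.
by rewrite real_leNgt ?hk2 // realn.
Qed.
Lemma Ws_bound (N : 'M[CC]_2) : Ws_Id N ->
  exists B K0, forall k, (K0 <= k)%N -> `|N ^+ (2 ^ k)| <= B.
Proof.
move=> hN.
have hb : bounded_near (fun k => iter k (@Phi_Id R) N) \oo by exact: (cvg_bounded _ _ hN).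
have [B hB] := proj1 (ex_bound _) hb; exists B.
case: hB => K0 _ hK; exists K0 => k hk.
by have := hK k hk; rewrite /= iterE.
Qed.

Lemma Ws_roots (N : 'M[CC]_2) m1 m2 : Ws_Id N -> m1 + m2 = tr2 N -> m1 * m2 = dt2 N ->
  `|m1| <= 1.
Proof.
move=> hN h1 h2; have [B [K0 hB]] := Ws_bound hN.
have [W [hW hNW]] := eigen h1 h2.
exact: (EVB hW hNW hB).
Qed.

Lemma chiE (N : 'M[CC]_2) m1 m2 x : m1 + m2 = tr2 N -> m1 * m2 = dt2 N ->
  x ^+ 2 - tr2 N * x + dt2 N = (x - m1) * (x - m2).
Proof. by move=> <- <-; ring. Qed.

Lemma dist_ge (x m : CC) : `|m| <= 1 -> `|x| - 1 <= `|x - m|.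
Proof. move=> hm; apply: le_trans (lerB_dist x m); by rewrite lerB. Qed.

Lemma closure_root (M : 'M[CC]_2) a c : closure (@Ws_Id R) M ->
  a + c = tr2 M -> a * c = dt2 M -> `|a| <= 1.
Proof.
move=> hcl h1 h2.
rewrite real_leNgt ?normr_real //; apply/negP => ha.
set d := `|a| - 1.
have d0 : 0 < d by rewrite subr_gt0.
set f := fun N : 'M[CC]_2 => dt2 N - a * tr2 N.
have fM : f M = - a ^+ 2.
  have := chiE a h1 h2; rewrite subrr mul0r /f => e.
  by apply/eqP; rewrite -subr_eq0 opprK -e; apply/eqP; ring.
have cf : f @ M --> f M.
  have FM : Filter (nbhs M) by apply: nbhs_filter.
  have c00 := @coord_continuous CC 2 2 0 0 M.
  have c01 := @coord_continuous CC 2 2 0 1 M.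
  have c10 := @coord_continuous CC 2 2 1 0 M.
  have c11 := @coord_continuous CC 2 2 1 1 M.
  have t1 := @cvgMl_tmp _ _ _ FM _ a _ (@cvgD _ _ _ _ FM _ _ _ _ c00 c11).
  have t3 := @cvgB _ _ _ _ FM _ _ _ _ (@cvgM _ _ _ FM _ _ _ _ c00 c11) (@cvgM _ _ _ FM _ _ _ _ c01 c10).
  exact: (@cvgB _ _ _ _ FM _ _ _ _ t3 t1).
have dd : 0 < d * d by rewrite mulr_gt0.
move: cf => /cvgrPdist_lt /(_ _ dd) hnear.
have [N [hWN hNd]] := hcl _ hnear.
have ef : f M - f N = - (a ^+ 2 - tr2 N * a + dt2 N) by rewrite fM /f; ring.
move: hNd; rewrite ef normrN.
have [m1 [m2 [e1 e2]]] := roots N.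
have hm1 := Ws_roots hWN e1 e2.
have e1' : m2 + m1 = tr2 N by rewrite addrC.
have e2' : m2 * m1 = dt2 N by rewrite mulrC.
have hm2 := Ws_roots hWN e1' e2'.
rewrite (chiE _ e1 e2) normrM.
apply/negP; rewrite -real_leNgt ?realM ?normr_real //.
apply: ler_pM; [exact: ltW | exact: ltW | exact: dist_ge | exact: dist_ge].
all: exact: gtr0_real d0.
Qed.
Lemma scalar_norm (x : CC) : `|(x%:M : 'M[CC]_2)| <= `|x|.
Proof.
apply: norm_le => // i j; rewrite mxE.
by case: (i == j); rewrite /= ?mulr1n ?mulr0n ?normr0.
Qed.

Lemma pow_norm a c (M : 'M[CC]_2) : (M - c%:M) *m (M - a%:M) = 0 ->
  forall n, `|M ^+ n| <= `|a| ^+ n + `|pseq a c n| * `|M - a%:M|.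
Proof.
move=> h n; rewrite (powE h); apply: (le_trans (ler_normD _ _)).
apply: lerD; first by rewrite -normrX scalar_norm.
by rewrite normrZ.
Qed.

Lemma bounded_roots (M : 'M[CC]_2) a c : bounded_set (orbit_Id M) ->
  a + c = tr2 M -> a * c = dt2 M -> `|a| <= 1.
Proof.
move=> hb h1 h2; have [B hB] := bounded_orbitP hb.
have [W [hW hMW]] := eigen h1 h2.
by apply: (EVB (K0 := 0%N) hW hMW) => k _; exact: hB.
Qed.
Lemma scaled_Ws (M : 'M[CC]_2) a c (r : CC) : a + c = tr2 M -> a * c = dt2 M ->
  `|a| <= 1 -> `|c| <= 1 -> 0 < r -> r < 1 -> Ws_Id ((r * r) *: M).
Proof.
move=> h1 h2 ha hc r0 r1.
have q0 : 0 <= r * r by rewrite mulr_ge0 // ltW.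
set q := r * r in q0 *; set N := q *: M.
have hCH : (N - (q * c)%:M) *m (N - (q * a)%:M) = 0.
  have h1' : c + a = tr2 M by rewrite addrC.
  have h2' : c * a = dt2 M by rewrite mulrC.
  have := CH h1' h2'.
  rewrite /N -!scale_scalar_mx -!scalerBr -scalemxAl -scalemxAr => ->.
  by rewrite !scaler0.
have [B [B0 hB]] := lin_geo_bound (ltW r0) r1.
set K := `|N - (q * a)%:M|.
have K0 : 0 <= K by apply: normr_ge0.
have hqa : `|q * a| <= q by rewrite normrM ger0_norm // ler_piMr.
have hqc : `|q * c| <= q by rewrite normrM ger0_norm // ler_piMr.
have rm0 : forall m, 0 <= r ^+ m by move=> m; rewrite exprn_ge0 // ltW.
have rm1 : forall m, r ^+ m <= 1 by move=> m; rewrite exprn_ile1 // ltW.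
have key : forall m, `|N ^+ m.+1| <= r ^+ m * (1 + (B + 1) * K).
  move=> m; apply: (le_trans (pow_norm hCH m.+1)).
  rewrite mulrDr mulr1; apply: lerD.
    apply: (le_trans (lerXn2r _ _ _ hqa)); rewrite ?nnegrE //.
    rewrite /q exprMn.
    have e1 : r ^+ m.+1 <= r ^+ m by rewrite exprS ler_piMl // ltW.
    rewrite -[X in _ <= X]mulr1; apply: ler_pM => //.
  rewrite mulrA ler_wpM2r //.
  apply: (le_trans (pseq_bound m q0 hqa hqc)).
  rewrite /q exprMn mulrA [_ * (B + 1)]mulrC ler_wpM2r //.
  by rewrite -natr1 mulrDl mul1r lerD.
have C0 : 0 < 1 + (B + 1) * K.
  apply: (lt_le_trans ltr01); rewrite lerDl mulr_ge0 // addr_ge0 // ler01.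
rewrite /Ws_Id /=; apply/cvgr0Pnorm_lt => eps e0.
have [N0 hN0] := geo_small r0 r1 (divr_gt0 e0 C0).
exists N0 => // k /= hk.
rewrite iterE.
have e2 : (2 ^ k)%N = (2 ^ k).-1.+1 by rewrite prednK // expn_gt0.
rewrite e2; apply: (le_lt_trans (key _)).
rewrite -ltr_pdivlMr //; apply: hN0.
apply: (leq_trans hk); rewrite -ltnS -e2; exact: ltn_expl.
Qed.
Lemma partA (M : 'M[CC]_2) : bounded_set (orbit_Id M) -> closure (@Ws_Id R) M.
Proof.
move=> hb; have [a [c [h1 h2]]] := roots M.
have ha := bounded_roots hb h1 h2.
have h1' : c + a = tr2 M by rewrite addrC.
have h2' : c * a = dt2 M by rewrite mulrC.
have hc := bounded_roots hb h1' h2'.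
move=> B /nbhs_ballP [e e0 he].
set D := e + `|M| + 1.
have M1 : 0 < `|M| + 1 by apply: ltr_wpDl => //; exact: normr_ge0.
have DE : D = e + (`|M| + 1) by rewrite /D addrA.
have eD1 : e < D by rewrite DE ltrDl.
have D0 : 0 < D by apply: lt_trans eD1.
have eD : e < D * 2.
  by apply: (lt_le_trans eD1); apply: ler_peMr; [exact: ltW | rewrite ler1n].
set eta := e / (D * 2).
have eta0 : 0 < eta by rewrite divr_gt0 // mulr_gt0.
have eta1 : eta < 1 by rewrite ltr_pdivrMr ?mul1r // mulr_gt0.
have r0 : 0 < 1 - eta by rewrite subr_gt0.
have r1 : 1 - eta < 1 by rewrite ltrBlDr ltrDl.
exists ((1 - eta) * (1 - eta) *: M); split; first exact: scaled_Ws h1 h2 ha hc r0 r1.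
apply: he; rewrite -ball_normE /ball_ /=.
rewrite -[X in X - _]scale1r -scalerBl normrZ.
have -> : 1 - (1 - eta) * (1 - eta) = eta * (2 - eta) by ring.
have e2 : 0 <= 2 - eta by rewrite subr_ge0 ltW // (lt_le_trans eta1) // ler1n.
rewrite ger0_norm ?mulr_ge0 // ?ltW //.
have h3 : eta * (2 - eta) <= eta * 2.
  by apply: ler_wpM2l; [exact: ltW | rewrite gerBl; exact: ltW].
apply: (le_lt_trans (ler_wpM2r (normr_ge0 M) h3)).
have -> : eta * 2 * `|M| = e * (`|M| / D) by rewrite /eta; field; rewrite gt_eqF.
rewrite -[X in _ < X]mulr1 ltr_pM2l // ltr_pdivrMr // mul1r DE.
rewrite ltr_wpDl ?ltW // ltrDl ltr01.
  by []. by rewrite invr_gt0 mulr_gt0.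
Qed.
Lemma J_roots (l : CC) : l + l = tr2 (jordan_block2 l) /\ l * l = dt2 (jordan_block2 l).
Proof. by rewrite /tr2 /dt2 !mxE /=; split => //; rewrite mulr0 subr0. Qed.

Lemma J_pow01 (l : CC) n : ((jordan_block2 l) ^+ n) 0 1 = pseq l l n.
Proof.
have [e1 e2] := J_roots l.
rewrite (powE (CH e1 e2)) !mxE /= mulr0n add0r mulr0n subr0 mulr1.
done.
Qed.

Lemma partB (M : 'M[CC]_2) l : `|l| = 1 -> has_jordan_form_block M l ->
  ~ bounded_set (orbit_Id M).
Proof.
move=> hl [P [hP hM]] hb; have [B hB] := bounded_orbitP hb.
set J := jordan_block2 l.
have conj : forall n, M ^+ n = P *m J ^+ n *m invmx P.
  elim=> [|n IH]; first by rewrite !expr0 mulmx1 mulmxV.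
  rewrite exprS IH hM -mulmxE.
  rewrite !mulmxA -[P *m J *m invmx P *m P]mulmxA mulVmx // mulmx1.
  by rewrite exprS -mulmxE !mulmxA.
have Jn : forall n, J ^+ n = invmx P *m M ^+ n *m P.
  by move=> n; rewrite conj !mulmxA mulVmx // mul1mx mulmxKV.
set C := `|invmx P| * B * `|P| *+ 4.
have B0 : 0 <= B by apply: le_trans (hB 0%N).
have Cr : C \is Num.real by apply: ger0_real; rewrite mulrn_wge0 // !mulr_ge0.
have [k hk] := archiC Cr.
have h1 : `|(J ^+ (2 ^ k)) 0 1| <= C.
  apply: (le_trans (entry_le _ _ _)); rewrite Jn.
  apply: (le_trans (mulmx_norm_le _ _)).
  have h2 := mulmx_norm_le (invmx P) (M ^+ (2 ^ k)).
  have h3 : `|invmx P *m M ^+ (2 ^ k)| <= `|invmx P| * B *+ 2.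
    apply: (le_trans h2); rewrite lerMn2r /=; apply: ler_wpM2l => //.
  apply: (le_trans (ler_wMn2r 2 (ler_wpM2r (normr_ge0 P) h3))).
  by rewrite /C mulrnAl -mulrnA.
move: h1; rewrite /J J_pow01.
have e2 : (2 ^ k)%N = (2 ^ k).-1.+1 by rewrite prednK // expn_gt0.
rewrite e2 pseq_eq normrM normrX hl expr1n mulr1 ger0_norm // -e2 => h1.
have : (k%:R : CC) < (2 ^ k)%:R by rewrite ltr_nat ltn_expl.
move=> h4; have := lt_trans hk (lt_le_trans h4 h1).
by rewrite ltxx.
Qed.
Definition mk2 (x00 x01 x10 x11 : CC) : 'M[CC]_2 :=
  \matrix_(i < 2, j < 2) if i == 0 then (if j == 0 then x00 else x01)
                         else (if j == 0 then x10 else x11).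

Lemma eq_by (x y z : CC) : z = 0 -> x - y = z -> x = y.
Proof. by move=> -> /eqP; rewrite subr_eq0 => /eqP. Qed.

Lemma sq0 (N : 'M[CC]_2) : N *m N = 0 ->
  [/\ N 0 0 * N 0 0 + N 0 1 * N 1 0 = 0, N 0 0 * N 0 1 + N 0 1 * N 1 1 = 0,
      N 1 0 * N 0 0 + N 1 1 * N 1 0 = 0 & N 1 0 * N 0 1 + N 1 1 * N 1 1 = 0].
Proof.
move=> h.
have e : forall i j, (N *m N) i j = 0 by move=> i j; rewrite h mxE.
move: (e 0 0) (e 0 1) (e 1 0) (e 1 1).
rewrite !mxE !big_ord_recl !big_ord0 /= ?o0 ?o1 !addr0 => h1 h2 h3 h4; by split.
Qed.

Lemma jordan_exists (M : 'M[CC]_2) a : (M - a%:M) *m (M - a%:M) = 0 -> M != a%:M ->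
  has_jordan_form_block M a.
Proof.
move=> hN0 hM.
have [N eN] : exists N, N = M - a%:M by eexists.
have hN : N *m N = 0 by rewrite eN.
have [e00 e01 e10 e11] := sq0 hN.
have hME : forall i j, M i j = N i j + a *+ (i == j).
  by move=> i j; rewrite eN !mxE subrK.
have key : forall P Q : 'M[CC]_2, P *m Q = 1%:M -> M *m P = P *m jordan_block2 a ->
    has_jordan_form_block M a.
  move=> P Q hPQ hMP; have [hP _] := mulmx1_unit hPQ.
  by exists P; split => //; rewrite -hMP mulmxK.
case: (eqVneq (N 1 0) 0) => h10; last first.
  apply: (key (mk2 (N 0 0) 1 (N 1 0) 0) (mk2 0 (N 1 0)^-1 1 (- (N 0 0 / N 1 0)))).
    apply: mx2P; rewrite !mxE !big_ord_recl !big_ord0 !mxE /= ?o0 ?o1 /=;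
      rewrite ?mulr1n ?mulr0n; field => //.
  apply: mx2P; rewrite !mxE !big_ord_recl !big_ord0 !mxE /= ?o0 ?o1 /= ?hME /=;
    rewrite ?mulr1n ?mulr0n.
  - by apply: (eq_by e00); ring.
  - by ring.
  - by apply: (eq_by e10); ring.
  - by ring.
case: (eqVneq (N 0 1) 0) => h01; last first.
  apply: (key (mk2 (N 0 1) 0 (N 1 1) 1) (mk2 (N 0 1)^-1 0 (- (N 1 1 / N 0 1)) 1)).
    apply: mx2P; rewrite !mxE !big_ord_recl !big_ord0 !mxE /= ?o0 ?o1 /=;
      rewrite ?mulr1n ?mulr0n; field => //.
  apply: mx2P; rewrite !mxE !big_ord_recl !big_ord0 !mxE /= ?o0 ?o1 /= ?hME /=;
    rewrite ?mulr1n ?mulr0n.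
  - by apply: (eq_by e01); ring.
  - by ring.
  - by apply: (eq_by e11); ring.
  - by ring.
exfalso; move: hM; rewrite -subr_eq0 -eN; apply/negP; rewrite negbK; apply/eqP.
move: e00 e11; rewrite h10 h01 ?mulr0 ?mul0r ?addr0 ?add0r => /eqP; rewrite mulf_eq0 orbb => /eqP z00.
move=> /eqP; rewrite mulf_eq0 orbb => /eqP z11.
by apply: mx2P; rewrite mxE.
Qed.
Lemma bound_gen (M : 'M[CC]_2) a c P0 : (M - c%:M) *m (M - a%:M) = 0 -> `|a| <= 1 ->
  (forall n, `|pseq a c n| * `|M - a%:M| <= P0) -> bounded_set (orbit_Id M).
Proof.
move=> h ha hp; apply: (@bounded_orbitI _ (1 + P0)) => k.
apply: (le_trans (pow_norm h _)); apply: lerD => //.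
by rewrite exprn_ile1.
Qed.

Lemma partC (M : 'M[CC]_2) : closure (@Ws_Id R) M ->
  ~ (exists l : CC, `|l| = 1 /\ has_jordan_form_block M l) -> bounded_set (orbit_Id M).
Proof.
move=> hcl hJ; have [a [c [h1 h2]]] := roots M.
have ha := closure_root hcl h1 h2.
have h1' : c + a = tr2 M by rewrite addrC.
have h2' : c * a = dt2 M by rewrite mulrC.
have hc := closure_root hcl h1' h2'.
have hCH := CH h1' h2'.
set K := `|M - a%:M|.
have K0 : 0 <= K by apply: normr_ge0.
case: (eqVneq a c) => hac; last first.
  have d0 : 0 < `|a - c| by rewrite normr_gt0 subr_eq0.
  apply: (bound_gen (P0 := (1 + 1) / `|a - c| * K) hCH ha) => n.
  rewrite ler_wpM2r //.
  have e : pseq a c n = (a ^+ n - c ^+ n) / (a - c).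
    by rewrite -pseq_diff mulfK // subr_eq0.
  rewrite e normrM normfV; apply: ler_wpM2r; first by rewrite invr_ge0 normr_ge0.
  apply: (le_trans (ler_normD _ _)); rewrite normrN !normrX.
  by apply: lerD; rewrite exprn_ile1.
rewrite -hac in hCH.
have [alt|age] := boolP (`|a| < 1).
  have [B0 [B00 hB0]] := lin_geo_bound (normr_ge0 a) alt.
  apply: (bound_gen (P0 := (B0 + 1) * K) hCH ha) => -[|m].
    by rewrite /= normr0 mul0r mulr_ge0 // addr_ge0.
  rewrite ler_wpM2r // pseq_eq normrM normrX ger0_norm //.
  by rewrite -natr1 mulrDl mul1r lerD // exprn_ile1.
have a1 : `|a| = 1.
  by apply/eqP; rewrite eq_le ha /= real_leNgt ?normr_real ?real1.
case: (eqVneq M a%:M) => hMa.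
  apply: (bound_gen (P0 := 0) hCH ha) => n.
  by rewrite /K hMa subrr normr0 mulr0.
by exfalso; apply: hJ; exists a; split => //; apply: jordan_exists.
Qed.

Lemma Prop35 :
  (forall M : 'M[CC]_2, bounded_set (orbit_Id M) -> closure (@Ws_Id R) M) /\
  (forall M : 'M[CC]_2, closure (@Ws_Id R) M ->
     (bounded_set (orbit_Id M) <->
      ~ (exists l : CC, `|l| = 1 /\ has_jordan_form_block M l))).
Proof.
split; first exact: partA.
move=> M hcl; split; last exact: partC.
by move=> hb [l [hl hJ]]; exact: partB hl hJ hb.
Qed.
End S.
Unset Implicit Arguments.

Theorem proposition3p5 (R : realType) :
  (forall M : 'M[C R]_2, bounded_set (orbit_Id M) -> closure (@Ws_Id R) M) /\
  (forall M : 'M[C R]_2, closure (@Ws_Id R) M ->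
     (bounded_set (orbit_Id M) <->
      ~ (exists l : C R, `|l| = 1 /\ has_jordan_form_block M l))).
Proof. exact: (Prop35 R). Qed.
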